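(* Let $a\in\mathbb{Z}$ and $b\in\mathbb{Z}_{\le0}$. Expand $q^{-\frac12(a-b)}X_4E_{(a,b)}-E_{(a-1,b-1)}$ as a $\mathbb{Z}[q^{\pm\frac12}]$-linear combination of standard monomials. Then every standard monomial $E_{(c,d)}$ occurring with nonzero coefficient satisfies: $c\ge a-1$ if $a>0$ and $c\ge a$ if $a\le0$; moreover $c\le a-b$ if $d\ge0$, and $c-d\le a-b$ if $d<0$.
   Context: Let $\mathcal{T}$ be the quantum torus over $\mathbb{Z}[q^{\pm\frac12}]$ generated by $X_1^{\pm1},X_2^{\pm1}$ with $X_1X_2=qX_2X_1$, with skew field of fractions $\mathcal{F}$. Define $X_k\in\mathcal{F}$ ($k\in\mathbb{Z}$) by $X_{k-1}X_{k+1}=q^{\frac12}X_k+1$ for $k$ odd and $X_{k-1}X_{k+1}=q^2X_k^4+1$ for $k$ even; $\mathcal{A}_q(1,4)$ is the $\mathbb{Z}[q^{\pm\frac12}]$-subalgebra of $\mathcal{F}$ generated by all $X_k$. For $x\in\mathbb{Z}$, $[x]_+=\max(x,0)$. Standard monomials: $E_{(a,b)}=q^{-\frac12ab}X_3^{[-a]_+}X_1^{[a]_+}X_2^{[b]_+}X_0^{[-b]_+}$ for $(a,b)\in\mathbb{Z}^2$; they form a $\mathbb{Z}[q^{\pm\frac12}]$-basis of $\mathcal{A}_q(1,4)$. *)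

(* Defs.v *)
(* An explicit model of the quantum torus T over Z[q^{±1/2}]. *)
From mathcomp Require Import all_boot all_order all_algebra.
Set Implicit Arguments. Unset Strict Implicit. Unset Printing Implicit Defensive.
Import Order.TTheory GRing.Theory Num.Theory.
Local Open Scope ring_scope.

(* Write t := q^{1/2}.  A Z-basis of T is { t^n X1^a X2^b : n a b in Z }
   (ordered monomials X1^a X2^b).  The triple (n,a,b) encodes t^n X1^a X2^b.
   Since X2^b X1^c = q^{-bc} X1^c X2^b, the product of basis elements is
   (n,a,b)*(m,c,d) = (n+m-2bc, a+c, b+d).  Hence T is the group ring over Z of
   this (Heisenberg-type) group law on Z^3, with t = (1,0,0) central. *)
Definition tmon := (int * int * int)%type.

Definition tmon_mul (x y : tmon) : tmon :=
  let: (n, a, b) := x in let: (m, c, d) := y in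
  (n + m - 2 * b * c, a + c, b + d).

(* Elements of T: finite formal Z-linear combinations of basis monomials,
   given as lists of (coefficient, monomial); two lists represent the same
   element iff they have the same coefficient function [qcoef]. *)
Definition qtor := seq (int * tmon).

Definition qcoef (x : qtor) (m : tmon) : int :=
  \sum_(p <- x | p.2 == m) p.1.

Definition qeq (x y : qtor) : Prop := forall m, qcoef x m = qcoef y m.

Definition qadd (x y : qtor) : qtor := x ++ y.
Definition qopp (x : qtor) : qtor := [seq (- p.1, p.2) | p <- x].
Definition qmul (x y : qtor) : qtor :=
  [seq (p.1 * r.1, tmon_mul p.2 r.2) | p <- x, r <- y].
Definition qmon (m : tmon) : qtor := [:: (1, m)].
Definition qone : qtor := qmon (0, 0, 0).
Definition qpow (x : qtor) (k : nat) : qtor := iter k (qmul x) qone.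

(* t^n = q^{n/2} *)
Definition qhalf (n : int) : qtor := qmon (n, 0, 0).
Definition X1 : qtor := qmon (0, 1, 0).
Definition X2 : qtor := qmon (0, 0, 1).
Definition X1inv : qtor := qmon (0, -1, 0).
Definition X2inv : qtor := qmon (0, 0, -1).

(* The cluster variables X0, X3, X4 (determined in the skew field F by the
   exchange relations, and lying in T):
   X0 X2 = q^{1/2} X1 + 1           (k = 1 odd)
   X1 X3 = q^2 X2^4 + 1             (k = 2 even)
   X2 X4 = q^{1/2} X3 + 1           (k = 3 odd)                            *)
Definition X0 : qtor := qmul (qadd (qmul (qhalf 1) X1) qone) X2inv.
Definition X3 : qtor := qmul X1inv (qadd (qmul (qhalf 4) (qpow X2 4)) qone).
Definition X4 : qtor := qmul X2inv (qadd (qmul (qhalf 1) X3) qone).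

Definition posp (x : int) : nat := match x with Posz n => n | Negz _ => 0%N end.

Definition stdmon (a b : int) : qtor :=
  qmul (qhalf (- (a * b)))
    (qmul (qpow X3 (posp (- a)))
      (qmul (qpow X1 (posp a))
        (qmul (qpow X2 (posp b)) (qpow X0 (posp (- b)))))).

(* A Z[q^{±1/2}]-linear combination of standard monomials, given as a list of
   entries ((c,d),(k,z)) standing for  z q^{k/2} E_(c,d). *)
Definition stdcomb := seq ((int * int) * (int * int)).

Definition stdcomb_val (L : stdcomb) : qtor :=
  flatten [seq qmul [:: (e.2.2, (e.2.1, 0, 0))] (stdmon e.1.1 e.1.2) | e <- L].

Definition stdcomb_coef (L : stdcomb) (cd : int * int) (k : int) : int :=
  \sum_(e <- L | (e.1 == cd) && (e.2.1 == k)) e.2.2.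

Definition stdcomb_occurs (L : stdcomb) (cd : int * int) : Prop :=
  exists k, stdcomb_coef L cd k != 0.

(* Main.v *)
Require Import Defs.
From mathcomp Require Import all_boot all_order all_algebra.
From mathcomp Require Import zify ring lra.
From Stdlib Require Import Setoid Morphisms.
Set Implicit Arguments. Unset Strict Implicit. Unset Printing Implicit Defensive.
Import Order.TTheory GRing.Theory Num.Theory.
Local Open Scope ring_scope.

Definition tinv (u : tmon) : tmon :=
  let: (n, a, b) := u in (- n - 2 * a * b, - a, - b).
Definition t0 : tmon := (0, 0, 0).

Lemma tmon_mulA u v w : tmon_mul (tmon_mul u v) w = tmon_mul u (tmon_mul v w).
Proof. case: u => [[n a] b]; case: v => [[m c] d]; case: w => [[k e] f] /=.
congr (_, _, _); ring. Qed.

Lemma tmon_mulV u : tmon_mul (tinv u) u = t0.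
Proof. case: u => [[n a] b] /=; rewrite /t0; congr (_, _, _); ring. Qed.
Lemma tmon_mulVr u : tmon_mul u (tinv u) = t0.
Proof. case: u => [[n a] b] /=; rewrite /t0; congr (_, _, _); ring. Qed.
Lemma tmon_mul1 u : tmon_mul t0 u = u.
Proof. case: u => [[n a] b] /=; congr (_, _, _); ring. Qed.
Lemma tmon_mul1r u : tmon_mul u t0 = u.
Proof. case: u => [[n a] b] /=; congr (_, _, _); ring. Qed.

Lemma tmul_eqE u v m : (tmon_mul u v == m) = (v == tmon_mul (tinv u) m).
Proof.
apply/eqP/eqP => [<-|->]; first by rewrite -tmon_mulA tmon_mulV tmon_mul1.
by rewrite -tmon_mulA tmon_mulVr tmon_mul1.
Qed.
Lemma tmul_eqE' u v m : (tmon_mul u v == m) = (u == tmon_mul m (tinv v)).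
Proof.
apply/eqP/eqP => [<-|->]; first by rewrite tmon_mulA tmon_mulVr tmon_mul1r.
by rewrite tmon_mulA tmon_mulV tmon_mul1r.
Qed.

Lemma qcoef_cat x y m : qcoef (x ++ y) m = qcoef x m + qcoef y m.
Proof. by rewrite /qcoef big_cat. Qed.
Lemma qcoef_opp x m : qcoef (qopp x) m = - qcoef x m.
Proof. rewrite /qcoef /qopp big_map /= -sumrN; by []. Qed.
Lemma qcoef_nil m : qcoef [::] m = 0.
Proof. by rewrite /qcoef big_nil. Qed.

Lemma qcoef_mul_raw x y m : qcoef (qmul x y) m =
  \sum_(p <- x) \sum_(r <- y) (if tmon_mul p.2 r.2 == m then p.1 * r.1 else 0).
Proof.
rewrite /qcoef /qmul big_mkcond big_allpairs_dep /=.
by apply: eq_bigr => p _; rewrite big_mkcond.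
Qed.

Lemma qcoef_mulL x y m : qcoef (qmul x y) m =
  \sum_(p <- x) p.1 * qcoef y (tmon_mul (tinv p.2) m).
Proof.
rewrite qcoef_mul_raw; apply: eq_bigr => p _.
rewrite /qcoef big_distrr /= [RHS]big_mkcond /=; apply: eq_bigr => r _.
by rewrite tmul_eqE; case: ifP; rewrite ?mulr0.
Qed.

Lemma qcoef_mulR x y m : qcoef (qmul x y) m =
  \sum_(r <- y) r.1 * qcoef x (tmon_mul m (tinv r.2)).
Proof.
rewrite qcoef_mul_raw exchange_big /=; apply: eq_bigr => r _.
rewrite /qcoef big_distrr /= [RHS]big_mkcond /=; apply: eq_bigr => p _.
by rewrite tmul_eqE'; case: ifP; rewrite ?mulr0 // mulrC.
Qed.

Lemma sum_group (T : eqType) (K : eqType) (s : seq T) (key : T -> K)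
   (w : T -> int) (G : K -> int) (U : seq K) :
  uniq U -> (forall e, e \in s -> key e \in U) ->
  \sum_(e <- s) w e * G (key e) =
  \sum_(k <- U) (\sum_(e <- s | key e == k) w e) * G k.
Proof.
move=> uU sU.
under [RHS]eq_bigr do rewrite big_distrl /= big_mkcond /=.
rewrite (exchange_big _ U s) /=; apply: eq_big_seq => e he.
rewrite (bigD1_seq (key e)) ?sU //= eqxx big1 ?addr0 // => k hk.
by rewrite eq_sym (negbTE hk).
Qed.

Lemma qcoef_eq_sum x (F : tmon -> int) (U : seq tmon) :
  uniq U -> (forall p, p \in x -> p.2 \in U) ->
  \sum_(p <- x) p.1 * F p.2 = \sum_(u <- U) qcoef x u * F u.
Proof.
move=> uU sU; rewrite (sum_group (fun p => p.1) F uU) //.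
Qed.

Lemma qeq_refl x : qeq x x. Proof. by []. Qed.
Lemma qeq_sym x y : qeq x y -> qeq y x. Proof. by move=> h m. Qed.
Lemma qeq_trans x y z : qeq x y -> qeq y z -> qeq x z.
Proof. by move=> h1 h2 m; rewrite h1. Qed.

Add Relation qtor qeq reflexivity proved by qeq_refl symmetry proved by qeq_sym
  transitivity proved by qeq_trans as qeq_rel.

Lemma qmul_congr_r x y y' : qeq y y' -> qeq (qmul x y) (qmul x y').
Proof. by move=> h m; rewrite !qcoef_mulL; apply: eq_bigr => p _; rewrite h. Qed.

Lemma qmul_congr_l x x' y : qeq x x' -> qeq (qmul x y) (qmul x' y).
Proof.
move=> h m; rewrite !qcoef_mulR; apply: eq_bigr => p _; by rewrite h.
Qed.

Add Morphism qmul with signature qeq ==> qeq ==> qeq as qmul_mor.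
Proof. move=> x x' hx y y' hy; apply: qeq_trans (qmul_congr_l _ hx) _.
exact: qmul_congr_r. Qed.
Add Morphism qadd with signature qeq ==> qeq ==> qeq as qadd_mor.
Proof. by move=> x x' hx y y' hy m; rewrite /qadd !qcoef_cat hx hy. Qed.
Add Morphism qopp with signature qeq ==> qeq as qopp_mor.
Proof. by move=> x x' hx m; rewrite !qcoef_opp hx. Qed.

Lemma qmulA x y z : qeq (qmul (qmul x y) z) (qmul x (qmul y z)).
Proof.
move=> m; rewrite qcoef_mulR qcoef_mulL.
under eq_bigr do rewrite qcoef_mulL big_distrr /=.
rewrite exchange_big /=; apply: eq_bigr => p _.
rewrite qcoef_mulR big_distrr /=; apply: eq_bigr => r _.
by rewrite mulrCA tmon_mulA.
Qed.

Definition ti (u : tmon) : int := u.1.2.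
Definition tj (u : tmon) : int := u.2.
Definition tn (u : tmon) : int := u.1.1.

Lemma ti_mul u v : ti (tmon_mul u v) = ti u + ti v.
Proof. by case: u => [[n a] b]; case: v => [[m c] d]. Qed.
Lemma tj_mul u v : tj (tmon_mul u v) = tj u + tj v.
Proof. by case: u => [[n a] b]; case: v => [[m c] d]. Qed.

Definition supp (x : qtor) (l h j : int) :=
  all (fun p => (l <= ti p.2 <= h) && (j <= tj p.2)) x.
Definition ones (x : qtor) := all (fun p => p.1 == 1) x.
Definition cnt (x : qtor) (i j : int) :=
  count (fun p => (ti p.2 == i) && (tj p.2 == j)) x.

Lemma suppP x l h j : reflect (forall p, p \in x -> l <= ti p.2 <= h /\ j <= tj p.2) (supp x l h j).
Proof.
apply: (iffP allP) => H p /H; first by case/andP.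
by case=> -> ->.
Qed.

Lemma supp_mul x y l1 h1 j1 l2 h2 j2 :
  supp x l1 h1 j1 -> supp y l2 h2 j2 -> supp (qmul x y) (l1 + l2) (h1 + h2) (j1 + j2).
Proof.
move=> /suppP hx /suppP hy; apply/suppP => q /allpairsP [[p r] [/= hp hr ->]] /=.
rewrite ti_mul tj_mul; move: (hx p hp) (hy r hr) => [/andP[a1 a2] a3] [/andP[b1 b2] b3].
move: a1 a2 a3 b1 b2 b3; move: (ti p.2) (ti r.2) (tj p.2) (tj r.2) => A B C D *.
split; [apply/andP; split|]; lia.
Qed.

Lemma supp_cat x y l h j : supp x l h j -> supp y l h j -> supp (x ++ y) l h j.
Proof. by rewrite /supp all_cat => -> ->. Qed.

Lemma supp_weak x l h j l' h' j' : supp x l h j -> l' <= l -> h <= h' -> j' <= j ->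
  supp x l' h' j'.
Proof.
move=> /suppP H a b c; apply/suppP => p /H [/andP[d e] f].
split; [apply/andP; split|]; lia.
Qed.

Lemma ones_mul x y : ones x -> ones y -> ones (qmul x y).
Proof.
move=> /allP hx /allP hy; apply/allP => q /allpairsP [[p r] [/= hp hr ->]] /=.
by rewrite (eqP (hx p hp)) (eqP (hy r hr)).
Qed.

Lemma ones_cat x y : ones x -> ones y -> ones (x ++ y).
Proof. by rewrite /ones all_cat => -> ->. Qed.

Lemma cnt_mul x y i1 j1 i2 j2 :
  (forall p r, p \in x -> r \in y ->
     (ti p.2 + ti r.2 == i1 + i2) && (tj p.2 + tj r.2 == j1 + j2) =
     ((ti p.2 == i1) && (tj p.2 == j1)) && ((ti r.2 == i2) && (tj r.2 == j2))) ->
  cnt (qmul x y) (i1 + i2) (j1 + j2) = (cnt x i1 j1 * cnt y i2 j2)%N.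
Proof.
elim: x => [|p x IH] H //=.
rewrite /cnt /qmul allpairs_cons count_cat count_map.
rewrite -/(cnt (qmul x y) _ _) IH; last by move=> p' r hp hr; apply: H; rewrite // inE hp orbT.
rewrite mulnDl; congr (_ + _)%N.
rewrite (@eq_in_count _ _ (fun r => ((ti p.2 == i1) && (tj p.2 == j1)) && ((ti r.2 == i2) && (tj r.2 == j2)))); last first.
  by move=> r hr /=; rewrite ti_mul tj_mul H // inE eqxx.
by case: ((ti p.2 == i1) && (tj p.2 == j1)) => /=; rewrite ?count_pred0 ?mul1n.
Qed.

Lemma cnt_mul_lo x y l1 h1 j1 l2 h2 j2 :
  supp x l1 h1 j1 -> supp y l2 h2 j2 ->
  cnt (qmul x y) (l1 + l2) (j1 + j2) = (cnt x l1 j1 * cnt y l2 j2)%N.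
Proof.
move=> /suppP hx /suppP hy; apply: cnt_mul => p r hp hr.
move: (hx p hp) (hy r hr) => [/andP[a1 a2] a3] [/andP[b1 b2] b3].
apply/idP/idP => /andP[e1 e2]; apply/andP; split; try (apply/andP; split); apply/eqP;
  (move/eqP: e1 e2 => e1 /eqP e2 || case/andP: e1 e2 => /eqP e1 /eqP e2 /andP [/eqP e3 /eqP e4]); lia.
Qed.

Lemma cnt_mul_hi x y l1 h1 j1 l2 h2 j2 :
  supp x l1 h1 j1 -> supp y l2 h2 j2 ->
  cnt (qmul x y) (h1 + h2) (j1 + j2) = (cnt x h1 j1 * cnt y h2 j2)%N.
Proof.
move=> /suppP hx /suppP hy; apply: cnt_mul => p r hp hr.
move: (hx p hp) (hy r hr) => [/andP[a1 a2] a3] [/andP[b1 b2] b3].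
apply/idP/idP => /andP[e1 e2]; apply/andP; split; try (apply/andP; split); apply/eqP;
  (move/eqP: e1 e2 => e1 /eqP e2 || case/andP: e1 e2 => /eqP e1 /eqP e2 /andP [/eqP e3 /eqP e4]); lia.
Qed.

Lemma posp_ge0 x : 0 <= x -> (posp x)%:Z = x.
Proof. by case: x. Qed.
Lemma posp_lt0 x : x < 0 -> (posp x)%:Z = 0.
Proof. by case: x. Qed.
Lemma posp_spec x : ((posp x)%:Z = x /\ 0 <= x) \/ ((posp x)%:Z = 0 /\ x < 0).
Proof. case: (lerP 0 x) => h; [left; rewrite posp_ge0 | right; rewrite posp_lt0]. all: by []. Qed.

Lemma supp_pow x l h j k : supp x l h j -> supp (qpow x k) (l *+ k) (h *+ k) (j *+ k).
Proof.
move=> hx; elim: k => [|k IH]; first by [].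
rewrite !mulrS; exact: supp_mul hx IH.
Qed.
Lemma ones_pow x k : ones x -> ones (qpow x k).
Proof. move=> hx; elim: k => [|k IH] //; exact: ones_mul. Qed.
Lemma cnt_pow_lo x l h j k : supp x l h j -> cnt x l j = 1%N -> cnt (qpow x k) (l *+ k) (j *+ k) = 1%N.
Proof.
move=> hx c1; elim: k => [|k IH]; first by [].
rewrite !mulrS /= (cnt_mul_lo hx (supp_pow k hx)) c1 IH //.
Qed.
Lemma cnt_pow_hi x l h j k : supp x l h j -> cnt x h j = 1%N -> cnt (qpow x k) (h *+ k) (j *+ k) = 1%N.
Proof.
move=> hx c1; elim: k => [|k IH]; first by [].
rewrite !mulrS /= (cnt_mul_hi hx (supp_pow k hx)) c1 IH //.
Qed.

Lemma X3_supp : supp X3 (-1) (-1) 0. Proof. by vm_compute. Qed.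
Lemma X3_cnt : cnt X3 (-1) 0 = 1%N. Proof. by vm_compute. Qed.
Lemma X3_ones : ones X3. Proof. by vm_compute. Qed.
Lemma X0_supp : supp X0 0 1 (-1). Proof. by vm_compute. Qed.
Lemma X0_cnt0 : cnt X0 0 (-1) = 1%N. Proof. by vm_compute. Qed.
Lemma X0_cnt1 : cnt X0 1 (-1) = 1%N. Proof. by vm_compute. Qed.
Lemma X0_ones : ones X0. Proof. by vm_compute. Qed.
Lemma X1_supp : supp X1 1 1 0. Proof. by vm_compute. Qed.
Lemma X1_cnt : cnt X1 1 0 = 1%N. Proof. by vm_compute. Qed.
Lemma X2_supp : supp X2 0 0 1. Proof. by vm_compute. Qed.
Lemma X2_cnt : cnt X2 0 1 = 1%N. Proof. by vm_compute. Qed.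
Lemma qhalf_supp s : supp (qhalf s) 0 0 0. Proof. by []. Qed.
Lemma qhalf_cnt s : cnt (qhalf s) 0 0 = 1%N. Proof. by []. Qed.

Definition hcorner (c d : int) : int := c + (posp (- d))%:Z.

Lemma stdmon_props c d :
  [/\ ones (stdmon c d), supp (stdmon c d) c (hcorner c d) d,
      cnt (stdmon c d) c d = 1%N & cnt (stdmon c d) (hcorner c d) d = 1%N].
Proof.
set m3 := posp (- c); set m1 := posp c; set m2 := posp d; set m0 := posp (- d).
have s3 := supp_pow m3 X3_supp. have s1 := supp_pow m1 X1_supp.
have s2 := supp_pow m2 X2_supp. have s0 := supp_pow m0 X0_supp.
have s02 := supp_mul s2 s0. have s012 := supp_mul s1 s02.
have s0123 := supp_mul s3 s012. have S := supp_mul (qhalf_supp (- (c * d))) s0123.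
have eL : c = 0 + (-1 *+ m3 + (1 *+ m1 + (0 *+ m2 + 0 *+ m0))).
  rewrite !mul0rn mulNrn !add0r addr0 ?natz /m3 /m1.
  case: (posp_spec c) => [[-> h]|[-> h]]; case: (posp_spec (- c)) => [[-> h']|[-> h']]; lia.
have eH : hcorner c d = 0 + (-1 *+ m3 + (1 *+ m1 + (0 *+ m2 + 1 *+ m0))).
  rewrite /hcorner !mul0rn mulNrn !add0r ?natz /m3 /m1 /m0.
  case: (posp_spec c) => [[-> h]|[-> h]]; case: (posp_spec (- c)) => [[-> h']|[-> h']]; lia.
have eJ : d = 0 + (0 *+ m3 + (0 *+ m1 + (1 *+ m2 + -1 *+ m0))).
  rewrite !mul0rn mulNrn !add0r ?natz /m2 /m0.
  case: (posp_spec d) => [[-> h]|[-> h]]; case: (posp_spec (- d)) => [[-> h']|[-> h']]; lia.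
split.
- rewrite /stdmon; apply: ones_mul => //; apply: ones_mul; first exact: ones_pow X3_ones.
  apply: ones_mul; first exact: ones_pow.
  apply: ones_mul; first exact: ones_pow.
  exact: ones_pow X0_ones.
- rewrite /stdmon; apply: (supp_weak S); lia.
- rewrite /stdmon; set Z := qmul _ _; rewrite [X in cnt Z X]eL [X in cnt Z _ X]eJ /Z (cnt_mul_lo (qhalf_supp _) s0123) (cnt_mul_lo s3 s012).
  rewrite (cnt_mul_lo s1 s02) (cnt_mul_lo s2 s0) qhalf_cnt.
  by rewrite (cnt_pow_lo _ X3_supp X3_cnt) (cnt_pow_lo _ X1_supp X1_cnt)
    (cnt_pow_lo _ X2_supp X2_cnt) (cnt_pow_lo _ X0_supp X0_cnt0).
- rewrite /stdmon; set Z := qmul _ _; rewrite [X in cnt Z X]eH [X in cnt Z _ X]eJ /Z (cnt_mul_hi (qhalf_supp _) s0123) (cnt_mul_hi s3 s012).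
  rewrite (cnt_mul_hi s1 s02) (cnt_mul_hi s2 s0) qhalf_cnt.
  by rewrite (cnt_pow_hi _ X3_supp X3_cnt) (cnt_pow_hi _ X1_supp X1_cnt)
    (cnt_pow_hi _ X2_supp X2_cnt) (cnt_pow_hi _ X0_supp X0_cnt1).
Qed.

Definition skey (e : (int * int) * (int * int)) := (e.1, e.2.1).
Definition coefk (L : stdcomb) (k : (int * int) * int) := stdcomb_coef L k.1 k.2.

Lemma shiftE k m : tmon_mul (tinv (k, 0, 0)) m = (tn m - k, ti m, tj m).
Proof. case: m => [[n a] b] /=; rewrite /tn /ti /tj /=; congr (_, _, _); ring. Qed.

Definition Gv (k : (int * int) * int) (m : tmon) :=
  qcoef (stdmon k.1.1 k.1.2) (tn m - k.2, ti m, tj m).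

Lemma val_coef L m : qcoef (stdcomb_val L) m =
  \sum_(k <- undup (map skey L)) coefk L k * Gv k m.
Proof.
have -> : qcoef (stdcomb_val L) m = \sum_(e <- L) e.2.2 * Gv (skey e) m.
  rewrite /qcoef /stdcomb_val big_flatten big_map /=; apply: eq_bigr => e _.
  rewrite -/(qcoef _ m) qcoef_mulL big_seq1 shiftE //.
rewrite (@sum_group _ _ L skey (fun e => e.2.2) (fun k => Gv k m) (undup (map skey L)) (undup_uniq _)); last first.
  by move=> e he; rewrite mem_undup map_f.
apply: eq_bigr => [[cd k]] _; rewrite /coefk /stdcomb_coef /=.
by congr (_ * _); apply: eq_bigl => e; rewrite /skey xpair_eqE.
Qed.

Lemma coefk_mem L k : coefk L k != 0 -> k \in map skey L.
Proof.
apply: contraR => hk; rewrite /coefk /stdcomb_coef big1_seq // => e /andP [h he].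
case/negP: hk; have <- : skey e = k by case: (k) h => cd kk /= /andP [/eqP <- /eqP <-].
exact: map_f.
Qed.

Lemma qcoef_nz x m : qcoef x m != 0 -> exists2 p, p \in x & p.2 = m.
Proof.
elim: x => [|p x IH]; first by rewrite qcoef_nil eqxx.
rewrite /qcoef big_cons; case: (p.2 =P m) => [e _|_]; first by exists p; rewrite ?inE ?eqxx.
by move/IH => [q hq e]; exists q; rewrite // inE hq orbT.
Qed.

Lemma qcoef_ones x m : ones x -> qcoef x m = (count (fun p => p.2 == m) x)%:Z.
Proof.
elim: x => [|p x IH]; first by rewrite qcoef_nil.
move=> /= /andP [/eqP h1 hx]; rewrite /qcoef big_cons -/(qcoef x m) IH // h1.
by case: eqP => _; rewrite ?add0r // PoszD.
Qed.

Lemma corner_coef x i j : ones x -> cnt x i j = 1%N ->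
  exists n0, qcoef x (n0, i, j) = 1 /\ forall n, n != n0 -> qcoef x (n, i, j) = 0.
Proof.
move=> ho hc.
have : size (filter (fun p => (ti p.2 == i) && (tj p.2 == j)) x) = 1%N by rewrite size_filter.
case E : filter => [|p0 [|]] // _.
have hp0 : p0 \in filter (fun p => (ti p.2 == i) && (tj p.2 == j)) x by rewrite E inE eqxx.
move: hp0; rewrite mem_filter => /andP [/andP [/eqP hi /eqP hj] _].
have key n : qcoef x (n, i, j) = (p0.2 == (n, i, j))%:Z.
  rewrite qcoef_ones //.
  have -> : count (fun p => p.2 == (n, i, j)) x =
     count (fun p => p.2 == (n, i, j)) (filter (fun p => (ti p.2 == i) && (tj p.2 == j)) x).
    rewrite count_filter; apply: eq_count => p /=.
    by case: eqP => //= ->; rewrite /ti /tj /= !eqxx.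
  by rewrite E /= addn0.
exists (tn p0.2); split.
  by rewrite key -hi -hj; case: (p0.2) => [[a b] c]; rewrite /tn /ti /tj /= eqxx.
move=> n hn; rewrite key; case: eqP => // e; case/negP: hn.
by rewrite e /tn.
Qed.

Lemma exists_min (X : eqType) (s : seq X) (f g : X -> int) x : x \in s ->
  exists2 y, y \in s & forall z, z \in s -> (f y < f z) || ((f y == f z) && (g y <= g z)).
Proof.
elim: s x => [|a s IH] x //; rewrite inE.
have [hs|hs] := boolP (has (fun _ => true) s).
  case/hasP: hs => w hw _ _; case: (IH w hw) => y hy Hy.
  case: (ltrP (f a) (f y)) => h1.
    exists a; first by rewrite inE eqxx.
    move=> z; rewrite inE => /orP [/eqP ->|hz]; first by rewrite eqxx lexx orbT.
    move: (Hy z hz) => /orP [h2|/andP [/eqP h2 h3]]; apply/orP; left; lia.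
  case: (boolP ((f a == f y) && (g a <= g y))) => h3.
    exists a; first by rewrite inE eqxx.
    move=> z; rewrite inE => /orP [/eqP ->|hz]; first by rewrite eqxx lexx orbT.
    move: h3 (Hy z hz) => /andP [/eqP h3 h4] /orP [h2|/andP [/eqP h2 h5]]; apply/orP.
      by left; lia.
    by right; apply/andP; split; [apply/eqP|]; lia.
  exists y; first by rewrite inE hy orbT.
  move=> z; rewrite inE => /orP [/eqP ->|hz]; last exact: Hy.
  move: h3; rewrite negb_and => /orP [h4|h4]; apply/orP.
    by left; rewrite lt_neqAle eq_sym h4 h1.
  by case: eqP => h5 /=; [right; rewrite -ltNge in h4; apply/ltW | left; rewrite lt_neqAle h1 andbT; apply/eqP].
move=> _; have -> : s = [::] by case: (s) hs.
exists a; first by rewrite inE eqxx.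
by move=> z; rewrite inE => /eqP ->; rewrite eqxx lexx orbT.
Qed.

Definition ordb (b : bool) (x : int) := if b then x else - x.

Lemma extract (b : bool) (phi : int -> int -> int) (L : stdcomb) :
  (forall c d p, p \in stdmon c d -> ordb b (phi c d) <= ordb b (ti p.2) /\ d <= tj p.2) ->
  (forall c d, cnt (stdmon c d) (phi c d) d = 1%N) ->
  (forall c c' d, phi c d = phi c' d -> c = c') ->
  forall c d k, coefk L ((c, d), k) != 0 ->
  exists c0 d0 n, ordb b (phi c0 d0) <= ordb b (phi c d) /\
     qcoef (stdcomb_val L) (n, phi c0 d0, d0) != 0.
Proof.
move=> HS HC Hinj c d k hk.
set U := undup (map skey L).
set O := filter (fun k => coefk L k != 0) U.
have kO : ((c, d), k) \in O by rewrite mem_filter hk mem_undup coefk_mem.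
have [[[c0 d0] k0] h0 Hmin] := exists_min (fun k => ordb b (phi k.1.1 k.1.2)) (fun k => k.1.2) kO.
move: h0; rewrite mem_filter => /andP [nz0 k0U].
have [n0 [e1 e2]] := corner_coef (let: And4 h _ _ _ := stdmon_props c0 d0 in h) (HC c0 d0).
exists c0, d0, (k0 + n0); split.
  by move: (Hmin _ kO) => /= /orP [h|/andP [/eqP h _]]; lia.
rewrite val_coef (bigD1_seq ((c0, d0), k0)) ?undup_uniq //= big1_seq ?addr0.
  by rewrite /Gv /tn /ti /tj /= addrC addKr e1 mulr1.
move=> [[c1 d1] k1] /andP [hne h1U].
case: (coefk L ((c1, d1), k1) =P 0) => [->|/eqP nz1]; first by rewrite mul0r.
have k1O : ((c1, d1), k1) \in O by rewrite mem_filter nz1.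
case: (Gv ((c1, d1), k1) (k0 + n0, phi c0 d0, d0) =P 0) => [->|/eqP nzG]; first by rewrite mulr0.
exfalso; move: (nzG); rewrite /Gv /tn /ti /tj /= => /qcoef_nz [p hp ep].
move: (HS c1 d1 p hp); rewrite ep /ti /tj /= => [[hA hB]].
move: (Hmin _ k1O) => /= /orP [hC|/andP [/eqP hC hD]].
  by move: hA hC; rewrite /ordb; case: ifP => _; lia.
have ed : d1 = d0 by lia.
have ephi : phi c1 d1 = phi c0 d0 by move: hC; rewrite /ordb; case: ifP => _; lia.
rewrite ed in ephi; have ec := Hinj _ _ _ ephi.
move: nzG; rewrite /Gv /tn /ti /tj /= ec ed.
case: (k0 + n0 - k1 =P n0) => [e|ne]; last by rewrite e2 ?eqxx //; apply/eqP.
have ek : k1 = k0 by lia.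
by move: hne; rewrite ec ed ek eqxx.
Qed.

Lemma qmul_qone_l x : qmul qone x = x.
Proof.
rewrite /qmul /qone /qmon allpairs1l; rewrite -[RHS]map_id; apply: eq_map => -[z u].
by rewrite mul1r (tmon_mul1 u).
Qed.

Lemma qmon_mul u v : qmul (qmon u) (qmon v) = qmon (tmon_mul u v).
Proof. by rewrite /qmul /qmon /= mulr1. Qed.

Lemma comm_hom (Y : qtor) c n bb :
  (forall p, p \in Y -> ti p.2 = c) ->
  qmul (qmon (n, 0, bb)) Y = qmul Y (qmon (n - 2 * bb * c, 0, bb)).
Proof.
move=> H; rewrite /qmul /qmon allpairs1l allpairs1r; apply/eq_in_map => -[z [[m i] j]] hp /=.
have := H _ hp; rewrite /ti /= => ->; rewrite mul1r mulr1; congr (_, (_, _, _)); ring.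
Qed.

Lemma qcoef_mon_sand u Y v m :
  qcoef (qmul (qmon u) (qmul Y (qmon v))) m = qcoef Y (tmon_mul (tmon_mul (tinv u) m) (tinv v)).
Proof.
rewrite qcoef_mulL big_seq1 mul1r qcoef_mulR big_seq1 mul1r //.
Qed.

Lemma X3pow_hom k p : p \in qpow X3 k -> ti p.2 = - (k%:Z).
Proof.
move: (supp_pow k X3_supp) => /suppP H /H [/andP [h1 h2] _].
rewrite mulNrn natz in h1 h2; move: h1 h2; move: (ti p.2) => t; lia.
Qed.

Lemma qpow_X2inv n : qpow X2inv n = qmon (0, 0, - (n%:Z)).
Proof.
elim: n => [|n IH] //=; rewrite IH /X2inv qmon_mul /=; congr qmon; congr (_, _, _); ring.
Qed.

Lemma cancel_id (ma nb : nat) :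
  qeq
   (qmul (qhalf (- ((- (ma%:Z)) - (- (nb%:Z)))))
     (qmul (qmul X2inv (qmul (qhalf 1) X3))
       (qmul (qhalf (- ((- (ma%:Z)) * (- (nb%:Z)))))
         (qmul (qpow X3 ma) (qmul qone (qmul qone (qpow X2inv nb)))))))
   (qmul (qhalf (- ((- (ma%:Z) - 1) * (- (nb%:Z) - 1))))
     (qmul (qpow X3 ma.+1) (qmul qone (qmul qone (qpow X2inv nb.+1))))).
Proof.
rewrite !qmul_qone_l !qpow_X2inv /qhalf.
setoid_rewrite <- (qmulA (qmon (- ((- (ma%:Z)) * (- (nb%:Z))), 0, 0)) (qpow X3 ma) (qmon (0, 0, - (nb%:Z)))).
rewrite (@comm_hom (qpow X3 ma) (- (ma%:Z)) (- ((- (ma%:Z)) * (- (nb%:Z)))) 0 (@X3pow_hom ma)).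
setoid_rewrite (qmulA (qpow X3 ma) (qmon (- (- (ma%:Z) * - (nb%:Z)) - 2 * 0 * - (ma%:Z), 0, 0)) (qmon (0, 0, - (nb%:Z)))).
rewrite qmon_mul.
setoid_rewrite <- (qmulA X2inv (qmon (1, 0, 0)) X3).
rewrite /X2inv qmon_mul.
set w := tmon_mul (0, 0, -1) _.
set u2 := tmon_mul _ (0, 0, - (nb%:Z)).
setoid_rewrite (qmulA (qmon w) X3 (qmul (qpow X3 ma) (qmon u2))).
setoid_rewrite <- (qmulA X3 (qpow X3 ma) (qmon u2)).
setoid_rewrite <- (qmulA (qmon (- (- (ma%:Z) - - (nb%:Z)), 0, 0)) (qmon w) (qmul (qmul X3 (qpow X3 ma)) (qmon u2))).
rewrite qmon_mul => m.
rewrite !qcoef_mon_sand.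
change (qmul X3 (qpow X3 ma)) with (qpow X3 ma.+1).
have Z t : ti t != - (ma.+1%:Z) -> qcoef (qpow X3 ma.+1) t = 0.
  move=> ht; apply/eqP; apply: contraR ht => /qcoef_nz [p hp <-].
  by rewrite (X3pow_hom hp).
case: m => [[n i] j].
have [hi|hi] := eqVneq i (- (ma.+1%:Z)).
  congr (qcoef _ _); rewrite /w /u2 hi /=; congr (_, _, _); ring.
by rewrite !Z // /w /u2 /ti /=; move: hi; apply: contra => /eqP <-; apply/eqP; ring.
Qed.

Definition comp (k : int) (x : qtor) := filter (fun p => ti p.2 == k) x.

Lemma qcoef_comp k x m : qcoef (comp k x) m = if ti m == k then qcoef x m else 0.
Proof.
rewrite /qcoef /comp big_filter_cond; case: (ti m =P k) => h.
  by apply: eq_bigl => p; case: (p.2 =P m) => [->|]; rewrite ?andbF // h eqxx.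
by rewrite big_pred0 // => p; case: (p.2 =P m) => [e|]; rewrite ?andbF // e; case: eqP.
Qed.

Lemma comp_mul x y l1 h1 j1 l2 h2 j2 l :
  supp x l1 h1 j1 -> supp y l2 h2 j2 -> l = l1 + l2 ->
  comp l (qmul x y) = qmul (comp l1 x) (comp l2 y).
Proof.
move=> hx hy ->; elim: x hx => [|p x IH] //= /andP [/andP [/andP [hp1 hp2] hp3] hx].
have -> : comp (l1 + l2) (qmul (p :: x) y) =
  comp (l1 + l2) [seq (p.1 * r.1, tmon_mul p.2 r.2) | r <- y] ++ comp (l1 + l2) (qmul x y).
  by rewrite /comp -filter_cat.
rewrite IH // {2}/comp /=.
case: eqP => e /=.
  rewrite /qmul allpairs_cons -/(qmul _ _); congr (_ ++ _); rewrite /comp filter_map /=; congr map.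
  by apply: eq_filter => r /=; rewrite ti_mul e; apply/eqP/eqP => h; lia.
rewrite /comp filter_map.
rewrite (@eq_in_filter _ _ pred0) ?filter_pred0 //.

move=> r hr /=; rewrite ti_mul; apply/eqP => h; apply: e.
move: hy => /suppP /(_ r hr) [/andP [h3 h4] _]; move: h3 h4 h hp1 hp2; move: (ti r.2) (ti p.2) => A B.
lia.
Qed.

Lemma comp_all x k j : supp x k k j -> comp k x = x.
Proof.
move=> /allP h; apply/all_filterP/allP => p /h /andP [/andP [h1 h2] _] /=.
by apply/eqP; move: h1 h2; move: (ti p.2) => A; lia.
Qed.

Lemma comp_cat k x y : comp k (x ++ y) = comp k x ++ comp k y.
Proof. by rewrite /comp filter_cat. Qed.
Lemma comp_opp k x : comp k (qopp x) = qopp (comp k x).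
Proof. by rewrite /comp /qopp filter_map. Qed.

Lemma supp_opp x l h j : supp x l h j -> supp (qopp x) l h j.
Proof. by rewrite /supp /qopp all_map. Qed.

Lemma X4_supp : supp X4 (-1) 0 (-1). Proof. by vm_compute. Qed.
Lemma comp_X4 : comp (-1) X4 = qmul X2inv (qmul (qhalf 1) X3). Proof. by vm_compute. Qed.
Lemma comp_X0 : comp 0 X0 = X2inv. Proof. by vm_compute. Qed.

Lemma comp_X0pow n : comp 0 (qpow X0 n) = qpow X2inv n.
Proof.
elim: n => [|n IH] //=.
rewrite (comp_mul X0_supp (supp_pow n X0_supp)); first by rewrite comp_X0 mul0rn IH.
by rewrite mul0rn addr0.
Qed.

Lemma compE (ma nb : nat) s l : l = - (ma%:Z) ->
  comp l (qmul (qhalf s) (qmul (qpow X3 ma) (qmul qone (qmul qone (qpow X0 nb))))) =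
  qmul (qhalf s) (qmul (qpow X3 ma) (qmul qone (qmul qone (qpow X2inv nb)))).
Proof.
move=> ->.
have sP3 := supp_pow ma X3_supp; have sP0 := supp_pow nb X0_supp.
have s1 : supp qone 0 0 0 by [].
have sA := supp_mul s1 sP0; have sB := supp_mul s1 sA; have sC := supp_mul sP3 sB.
rewrite (comp_mul (qhalf_supp s) sC); last by rewrite mulNrn mul0rn natz; ring.
rewrite (comp_mul sP3 sB); last by [].
rewrite (comp_mul s1 sA); last by [].
rewrite (comp_mul s1 sP0); last by rewrite mul0rn.
rewrite (comp_all sP3) mul0rn comp_X0pow //.
Qed.

Lemma cancel_V (ma nb : nat) m : ti m = - (ma%:Z) - 1 ->
  qcoef (qadd (qmul (qhalf (- ((- (ma%:Z)) - (- (nb%:Z))))) (qmul X4 (stdmon (- (ma%:Z)) (- (nb%:Z)))))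
            (qopp (stdmon (- (ma%:Z) - 1) (- (nb%:Z) - 1)))) m = 0.
Proof.
move=> hm.
have sE := let: And4 _ h _ _ := stdmon_props (- (ma%:Z)) (- (nb%:Z)) in h.
set V := qadd _ _.
have <- : qcoef (comp (- (ma%:Z) - 1) V) m = qcoef V m by rewrite qcoef_comp hm eqxx.
rewrite /V.
rewrite /qadd comp_cat comp_opp.
rewrite (comp_mul (qhalf_supp _) (supp_mul X4_supp sE)); last by ring.
rewrite (comp_mul X4_supp sE); last by ring.
rewrite comp_X4.
have e1 : posp (- - (ma%:Z)) = ma by rewrite opprK.
have e2 : posp (- (ma%:Z)) = 0%N by case: (ma).
have e3 : posp (- - (nb%:Z)) = nb by rewrite opprK.
have e4 : posp (- (nb%:Z)) = 0%N by case: (nb).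
have e5 : posp (- (- (ma%:Z) - 1)) = ma.+1 by have -> : - (- (ma%:Z) - 1) = (ma.+1)%:Z by lia.
have e6 : posp (- (ma%:Z) - 1) = 0%N by have -> : - (ma%:Z) - 1 = Negz ma by rewrite NegzE; lia.
have e7 : posp (- (- (nb%:Z) - 1)) = nb.+1 by have -> : - (- (nb%:Z) - 1) = (nb.+1)%:Z by lia.
have e8 : posp (- (nb%:Z) - 1) = 0%N by have -> : - (nb%:Z) - 1 = Negz nb by rewrite NegzE; lia.
rewrite /stdmon e1 e2 e3 e4 e5 e6 e7 e8.
rewrite (compE _ _ (erefl _)) (compE _ _ (l := - (ma%:Z) - 1)); last by rewrite -opprD addrC.
rewrite qcoef_cat qcoef_opp (cancel_id ma nb m) subrr //.
Qed.

Lemma V_supp (a b : int) (hb : b <= 0) m :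
  qcoef (qadd (qmul (qhalf (- (a - b))) (qmul X4 (stdmon a b)))
            (qopp (stdmon (a - 1) (b - 1)))) m != 0 ->
  (if 0 < a then a - 1 <= ti m else a <= ti m) /\ ti m <= a - b.
Proof.
move=> hnz.
have sE := let: And4 _ h _ _ := stdmon_props a b in h.
have sE' := let: And4 _ h _ _ := stdmon_props (a - 1) (b - 1) in h.
have hab : hcorner a b = a - b.
  rewrite /hcorner posp_ge0; lia.
have hab' : hcorner (a - 1) (b - 1) = a - b.
  rewrite /hcorner posp_ge0; lia.
rewrite hab in sE; rewrite hab' in sE'.
have sV : supp (qadd (qmul (qhalf (- (a - b))) (qmul X4 (stdmon a b)))
            (qopp (stdmon (a - 1) (b - 1)))) (a - 1) (a - b) (b - 1).
  apply: supp_cat; last exact: supp_opp.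
  apply: supp_weak (supp_mul (qhalf_supp _) (supp_mul X4_supp sE)) _ _ _; lia.
have [p hp ep] := qcoef_nz hnz.
move: sV => /suppP /(_ p hp) [/andP [h1 h2] _]; rewrite ep in h1 h2.
split=> //; case: ifP => // ha.
have [ma ema] : exists ma : nat, a = - (ma%:Z).
  by exists (posp (- a)); rewrite posp_ge0 ?opprK //; lia.
have [nb enb] : exists nb : nat, b = - (nb%:Z).
  by exists (posp (- b)); rewrite posp_ge0 ?opprK //; lia.
case: (ti m =P a - 1) => e; last by lia.
exfalso; move: hnz; rewrite ema enb in e *; rewrite (@cancel_V ma nb m e) eqxx //.
Qed.

Lemma stdmon_lo c d p : p \in stdmon c d -> ordb true c <= ordb true (ti p.2) /\ d <= tj p.2.
Proof.
case: (stdmon_props c d) => _ /suppP h _ _ /h [/andP [h1 _] h2]; by split.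
Qed.
Lemma stdmon_hi c d p : p \in stdmon c d -> ordb false (hcorner c d) <= ordb false (ti p.2) /\ d <= tj p.2.
Proof.
case: (stdmon_props c d) => _ /suppP h _ _ /h [/andP [_ h1] h2]; split => //=.
by rewrite lerN2.
Qed.
Lemma stdmon_clo c d : cnt (stdmon c d) c d = 1%N.
Proof. by case: (stdmon_props c d). Qed.
Lemma stdmon_chi c d : cnt (stdmon c d) (hcorner c d) d = 1%N.
Proof. by case: (stdmon_props c d). Qed.
Lemma hcorner_inj c c' d : hcorner c d = hcorner c' d -> c = c'.
Proof. rewrite /hcorner; lia. Qed.

Theorem lemma4p6 (a b : int) (hb : b <= 0) (L : stdcomb) :
  qeq (stdcomb_val L)
      (qadd (qmul (qhalf (- (a - b))) (qmul X4 (stdmon a b)))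
            (qopp (stdmon (a - 1) (b - 1)))) ->
  forall c d : int, stdcomb_occurs L (c, d) ->
    (if 0 < a then a - 1 <= c else a <= c) /\
    (if 0 <= d then c <= a - b else c - d <= a - b).
Proof.
move=> hV c d [k hk].
have hk' : coefk L ((c, d), k) != 0 := hk.
have VS m : qcoef (stdcomb_val L) m != 0 ->
    (if 0 < a then a - 1 <= ti m else a <= ti m) /\ ti m <= a - b.
  by rewrite hV; apply: V_supp.
split.
- have [c0 [d0 [n [h1 h2]]]] := @extract true (fun c d => c) L stdmon_lo stdmon_clo
    (fun c c' d e => e) c d k hk'.
  move: (VS _ h2) => [+ _]; rewrite /ordb /ti /= in h1 *.
  by case: ifP => _; lia.
- have [c0 [d0 [n [h1 h2]]]] := @extract false hcorner L stdmon_hi stdmon_chi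
    hcorner_inj c d k hk'.
  move: (VS _ h2) => [_]; rewrite /ordb /ti /= in h1 *.
  rewrite /hcorner in h1 *; move=> h3.
  case: ifP => hd.
    have : (posp (- d))%:Z = 0 by case: (posp_spec (- d)) => [[-> ?]|[-> ?]]; lia.
    lia.
  have : (posp (- d))%:Z = - d by rewrite posp_ge0; lia.
  lia.
Qed.
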